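(* Let $N\ge3$, $\gamma\in(0,1)$, assume $\chi$ satisfies (C1),(C2), and assume that for some $C_v>0$ the solution satisfies $v(r,t)\le C_v r^{2-N}$ for all $r\in(0,R)$, $t\in(0,T_{\max})$. Then there is $C>0$, depending only on $R,\chi_0,a,N,k,C_v$, such that for all $t\in(0,T_{\max})$ and $s_0\in(0,R^N)$, $$I_2(s_0,t)\ge C\int_0^{s_0}s^{-\gamma+(1-\frac2N)k}(s_0-s)w(s,t)w_s(s,t)\,ds .$$
   Context: Let $N\ge3$, $R>0$, $\Omega=B_R(0)\subset\mathbb{R}^N$, $m\ge1$, $\chi:(0,\infty)\to\mathbb{R}$. System (KS): $u_t=\Delta(u+1)^m-\nabla\cdot(u\chi(v)\nabla v)$, $0=\Delta v-v+u$ in $\Omega\times(0,\infty)$, $\partial_\nu u=\partial_\nu v=0$ on $\partial\Omega$, $u(\cdot,0)=u_0$, with $u_0\in C^0(\overline\Omega)\setminus\{0\}$ radially symmetric, nonnegative, $M_0=\int_\Omega u_0$. $\eta:=M_0\int_0^\infty(4\pi t)^{-N/2}e^{-(t+\frac{(2R)^2}{4t})}dt$. (C1): $\chi(s)\ge\chi_0(a+s)^{-k}$ for all $s>0$, with $\chi_0>0,a\ge0,k>0$. (C2): $\chi\in C^1((0,\infty))\cap L^\infty(\eta,\infty)$. $(u,v)$ denotes the maximal radial nonnegative classical solution on $[0,T_{\max})$; $u(r,t),v(r,t)$ with $r=|x|$. Define $w(s,t):=\int_0^{s^{1/N}}\rho^{N-1}u(\rho,t)d\rho$, $z(s,t):=\int_0^{s^{1/N}}\rho^{N-1}v(\rho,t)d\rho$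 for $s\in[0,R^N]$, and $I_2(s_0,t):=N\int_0^{s_0}s^{-\gamma}(s_0-s)\chi(Nz_s(s,t))w(s,t)w_s(s,t)\,ds$. *)

(* Defs.v *)
From Stdlib Require Import Reals Lra.
From Coquelicot Require Import Coquelicot.
Open Scope R_scope.

Definition rootN (N : nat) (s : R) : R :=
  if Rle_dec s 0 then 0 else Rpower s (/ INR N).

(* Volume of the unit ball of R^n: V_0 = 1, V_1 = 2, V_n = 2 pi / n * V_(n-2). *)
Fixpoint ball_vol (n : nat) : R :=
  match n with
  | O => 1
  | S O => 2
  | S (S p as q) => 2 * PI / INR (S q) * ball_vol p
  end.

(* M_0 = int_Omega u_0 for a radial u_0 with profile u0 : [0,R] -> R
   (|S^{N-1}| = N * |B_1|). *)
Definition mass0 (N : nat) (R0 : R) (u0 : R -> R) : R :=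
  INR N * ball_vol N * RInt (fun r => r ^ (N - 1) * u0 r) 0 R0.

Definition eta (N : nat) (R0 : R) (u0 : R -> R) : R :=
  mass0 N R0 u0 *
  RInt_gen (fun t => Rpower (4 * PI * t) (- (INR N) / 2)
                     * exp (- (t + (2 * R0) ^ 2 / (4 * t))))
           (at_right 0) (Rbar_locally p_infty).

(* Radial divergence of a radial vector field with radial component F:
   r^{1-N} (r^{N-1} F)_r = F' + (N-1)/r F. *)
Definition divr (N : nat) (F : R -> R) (r : R) : R :=
  Derive F r + (INR N - 1) / r * F r.

Definition cont2_on (D : R -> R -> Prop) (f : R -> R -> R) : Prop :=
  forall r t, D r t -> forall eps, 0 < eps -> exists delta, 0 < delta /\
    forall r' t', D r' t' -> Rabs (r' - r) < delta -> Rabs (t' - t) < delta ->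
      Rabs (f r' t' - f r t) < eps.

Definition ur (u : R -> R -> R) (r t : R) : R := Derive (fun x => u x t) r.
Definition urr (u : R -> R -> R) (r t : R) : R := Derive (fun x => ur u x t) r.
Definition ut (u : R -> R -> R) (r t : R) : R := Derive (fun s => u r s) t.

Definition condC1 (chi : R -> R) (chi0 a k : R) : Prop :=
  forall s, 0 < s -> chi s >= chi0 * Rpower (a + s) (- k).

(* (C2): chi in C^1((0,oo)) and chi in L^oo(eta,oo) (chi is continuous there,
   so the essential sup is the sup). *)
Definition condC2 (chi : R -> R) (eta0 : R) : Prop :=
  (forall s, 0 < s -> ex_derive chi s /\ continuous (Derive chi) s) /\
  (exists M, forall s, eta0 < s -> Rabs (chi s) <= M).

Definition admissible_u0 (R0 : R) (u0 : R -> R) : Prop :=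
  (forall r, 0 <= r <= R0 -> continuity_pt u0 r /\ 0 <= u0 r) /\
  (exists r, 0 <= r <= R0 /\ u0 r <> 0).

(* (u,v) (radial profiles u(r,t), v(r,t)) is the maximal radial nonnegative
   classical solution of (KS) on [0,Tmax), written in radial coordinates. *)
Definition max_radial_classical_solution (N : nat) (R0 m : R) (chi : R -> R)
  (u0 : R -> R) (u v : R -> R -> R) (Tmax : Rbar) : Prop :=
  Rbar_lt 0 Tmax /\
  (* continuity: u in C^0(closure Omega x [0,T)), v in C^0(closure Omega x (0,T)) *)
  cont2_on (fun r t => 0 <= r <= R0 /\ 0 <= t /\ Rbar_lt t Tmax) u /\
  cont2_on (fun r t => 0 <= r <= R0 /\ 0 < t /\ Rbar_lt t Tmax) v /\
  (* C^{2,1} / C^{2,0} regularity in the interior *)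
  (forall r t, 0 < r < R0 -> 0 < t -> Rbar_lt t Tmax ->
     ex_derive (fun x => u x t) r /\ ex_derive (fun x => ur u x t) r /\
     ex_derive (fun s => u r s) t /\
     ex_derive (fun x => v x t) r /\ ex_derive (fun x => ur v x t) r) /\
  cont2_on (fun r t => 0 < r < R0 /\ 0 < t /\ Rbar_lt t Tmax) (ur u) /\
  cont2_on (fun r t => 0 < r < R0 /\ 0 < t /\ Rbar_lt t Tmax) (urr u) /\
  cont2_on (fun r t => 0 < r < R0 /\ 0 < t /\ Rbar_lt t Tmax) (ut u) /\
  cont2_on (fun r t => 0 < r < R0 /\ 0 < t /\ Rbar_lt t Tmax) (ur v) /\
  cont2_on (fun r t => 0 < r < R0 /\ 0 < t /\ Rbar_lt t Tmax) (urr v) /\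
  (* nonnegativity (v > 0, as chi is only defined on (0,oo)) *)
  (forall r t, 0 <= r <= R0 -> 0 <= t -> Rbar_lt t Tmax -> 0 <= u r t) /\
  (forall r t, 0 <= r <= R0 -> 0 < t -> Rbar_lt t Tmax -> 0 < v r t) /\
  (forall r t, 0 < r < R0 -> 0 < t -> Rbar_lt t Tmax ->
     ut u r t =
       divr N (fun x => Derive (fun y => Rpower (u y t + 1) m) x) r
       - divr N (fun x => u x t * chi (v x t) * ur v x t) r) /\
  (forall r t, 0 < r < R0 -> 0 < t -> Rbar_lt t Tmax ->
     0 = divr N (fun x => ur v x t) r - v r t + u r t) /\
  (forall t, 0 < t -> Rbar_lt t Tmax ->
     filterlim (fun r => ur u r t) (at_left R0) (locally 0) /\
     filterlim (fun r => ur v r t) (at_left R0) (locally 0)) /\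
  (forall r, 0 <= r <= R0 -> u r 0 = u0 r) /\
  (* maximality: blow-up alternative *)
  (forall T, Tmax = Finite T ->
     forall M, exists r t, 0 <= r <= R0 /\ 0 <= t < T /\ u r t > M).

Definition wfun (N : nat) (u : R -> R -> R) (s t : R) : R :=
  RInt (fun rho => rho ^ (N - 1) * u rho t) 0 (rootN N s).

Definition ws (N : nat) (u : R -> R -> R) (s t : R) : R :=
  Derive (fun x => wfun N u x t) s.

Definition I2 (N : nat) (gamma : R) (chi : R -> R) (u v : R -> R -> R)
  (s0 t : R) : R :=
  INR N * RInt (fun s => Rpower s (- gamma) * (s0 - s)
                         * chi (INR N * ws N v s t) * wfun N u s t * ws N u s t)
               0 s0.

(* Main.v *)
Require Import Defs.
From Stdlib Require Import Reals Lra Lia.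
From Coquelicot Require Import Coquelicot.
Open Scope R_scope.

Lemma cont_eps (f : R -> R) x :
  (forall eps, 0 < eps -> exists d, 0 < d /\ forall y, Rabs (y - x) < d -> Rabs (f y - f x) < eps) ->
  continuous f x.
Proof.
  intros H. apply continuity_pt_filterlim.
  intros eps Heps. destruct (H eps Heps) as [d [Hd Hy]].
  exists d; split; auto. intros y [_ Hy2]. apply Hy. exact Hy2.
Qed.

Lemma cont_to_pt (f : R -> R) x : continuous f x -> continuity_pt f x.
Proof. intros H; apply continuity_pt_filterlim; exact H. Qed.

Definition relc (phi : R -> R) (R0 : R) : Prop :=
  forall r, 0 <= r <= R0 -> forall eps, 0 < eps -> exists delta, 0 < delta /\
    forall r', 0 <= r' <= R0 -> Rabs (r' - r) < delta -> Rabs (phi r' - phi r) < eps.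

Definition clamp (R0 r : R) : R := Rmax 0 (Rmin R0 r).

Lemma clamp_in R0 r : 0 <= R0 -> 0 <= clamp R0 r <= R0.
Proof. intros; unfold clamp, Rmax, Rmin; repeat destruct Rle_dec; lra. Qed.

Lemma clamp_id R0 r : 0 <= r <= R0 -> clamp R0 r = r.
Proof. intros; unfold clamp, Rmax, Rmin; repeat destruct Rle_dec; lra. Qed.

Lemma clamp_lip R0 r r' : 0 <= R0 -> Rabs (clamp R0 r' - clamp R0 r) <= Rabs (r' - r).
Proof. intros; unfold clamp, Rmax, Rmin; repeat destruct Rle_dec; unfold Rabs; repeat destruct Rcase_abs; lra. Qed.

Lemma clamp_cont phi R0 x : 0 <= R0 -> relc phi R0 -> continuous (fun r => phi (clamp R0 r)) x.
Proof.
  intros H0 Hc. apply cont_eps. intros eps He.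
  destruct (Hc (clamp R0 x) (clamp_in R0 x H0) eps He) as [d [Hd Hy]].
  exists d; split; auto. intros y Hyx. apply Hy. apply clamp_in; auto.
  eapply Rle_lt_trans; [apply clamp_lip; auto| exact Hyx].
Qed.

Lemma rootN_nonpos N s : s <= 0 -> rootN N s = 0.
Proof. intros; unfold rootN; destruct Rle_dec; lra. Qed.

Lemma rootN_pos N s : 0 < s -> rootN N s = Rpower s (/ INR N).
Proof. intros; unfold rootN; destruct Rle_dec; lra. Qed.

Lemma rootN_gt0 N s : 0 < s -> 0 < rootN N s.
Proof. intros; rewrite rootN_pos; auto. unfold Rpower; apply exp_pos. Qed.

Lemma rootN_pow N s : (1 <= N)%nat -> 0 < s -> rootN N s ^ N = s.
Proof.
  intros HN Hs. rewrite rootN_pos; auto. rewrite <- Rpower_pow.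
  2: unfold Rpower; apply exp_pos.
  rewrite Rpower_mult. rewrite Rinv_l. apply Rpower_1; auto.
  apply not_0_INR; lia.
Qed.

Lemma rootN_lt N s R0 : (1 <= N)%nat -> 0 < R0 -> 0 < s < R0 ^ N -> rootN N s < R0.
Proof.
  intros HN HR Hs. destruct (Rlt_or_le (rootN N s) R0) as [H|H]; auto.
  exfalso. assert (R0 ^ N <= rootN N s ^ N) by (apply pow_incr; lra).
  rewrite rootN_pow in H0; auto; lra.
Qed.

Lemma rootN_small N s d : (1 <= N)%nat -> 0 < d -> 0 < s < d ^ N -> rootN N s < d.
Proof. intros; apply rootN_lt; auto. Qed.

Lemma rootN_derive N s : (1 <= N)%nat -> 0 < s ->
  is_derive (rootN N) s (/ INR N * Rpower s (/ INR N - 1)).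
Proof.
  intros HN Hs.
  apply is_derive_ext_loc with (f := fun x => Rpower x (/ INR N)).
  - exists (mkposreal s Hs). intros y Hy. simpl in Hy.
    unfold ball in Hy; simpl in Hy; unfold AbsRing_ball, abs, minus, plus, opp in Hy; simpl in Hy.
    rewrite rootN_pos; auto. apply Rabs_lt_between in Hy. lra.
  - apply is_derive_Reals. apply derivable_pt_lim_power; auto.
Qed.

Lemma rootN_cont N s : (1 <= N)%nat -> 0 < s -> continuous (rootN N) s.
Proof. intros; apply (@ex_derive_continuous R_AbsRing R_NormedModule); eexists; apply rootN_derive; auto. Qed.
Definition Wc N R0 (phi : R -> R) x := RInt (fun r => r ^ (N - 1) * phi (clamp R0 r)) 0 x.

Lemma pow_N1 N x : (1 <= N)%nat -> x ^ N = x * x ^ (N - 1).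
Proof. intros. rewrite tech_pow_Rmult. f_equal. lia. Qed.

Section Gen.
Variables (N : nat) (R0 : R) (phi : R -> R).
Hypothesis HN : (1 <= N)%nat.
Hypothesis HR0 : 0 < R0.
Hypothesis Hc : relc phi R0.

Lemma integ_cont x : continuous (fun r => r ^ (N - 1) * phi (clamp R0 r)) x.
Proof.
  apply (continuous_mult (fun r => r ^ (N-1)) (fun r => phi (clamp R0 r))).
  - apply (@ex_derive_continuous R_AbsRing R_NormedModule). auto_derive; auto.
  - apply clamp_cont; auto; lra.
Qed.

Lemma integ_ex a b : ex_RInt (fun r => r ^ (N - 1) * phi (clamp R0 r)) a b.
Proof. apply (@ex_RInt_continuous R_CompleteNormedModule); intros; apply integ_cont. Qed.

Lemma Wc_derive x : is_derive (Wc N R0 phi) x (x ^ (N - 1) * phi (clamp R0 x)).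
Proof.
  apply (is_derive_RInt (fun r => r ^ (N - 1) * phi (clamp R0 r)) _ 0).
  - exists (mkposreal 1 Rlt_0_1). intros y _. apply (@RInt_correct R_CompleteNormedModule), integ_ex.
  - apply integ_cont.
Qed.

Lemma Wc_cont x : continuous (Wc N R0 phi) x.
Proof. apply (@ex_derive_continuous R_AbsRing R_NormedModule); eexists; apply Wc_derive. Qed.

Lemma W_eq x : 0 <= x <= R0 -> RInt (fun r => r ^ (N - 1) * phi r) 0 x = Wc N R0 phi x.
Proof.
  intros Hx. unfold Wc. apply RInt_ext. intros y Hy.
  rewrite Rmin_left in Hy by lra. rewrite Rmax_right in Hy by lra.
  rewrite clamp_id; auto; lra.
Qed.

Lemma rootN_in s : s < R0 ^ N -> 0 <= rootN N s <= R0.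
Proof.
  intros Hs. destruct (Rle_or_lt s 0).
  - rewrite rootN_nonpos; auto; lra.
  - split. left; apply rootN_gt0; auto. left; apply rootN_lt; auto.
Qed.

Lemma wf_eq s : s < R0 ^ N ->
  RInt (fun r => r ^ (N - 1) * phi r) 0 (rootN N s) = Wc N R0 phi (rootN N s).
Proof. intros; apply W_eq, rootN_in; auto. Qed.

Lemma wf_derive s : 0 < s < R0 ^ N ->
  is_derive (fun x => RInt (fun r => r ^ (N - 1) * phi r) 0 (rootN N x)) s (phi (rootN N s) / INR N).
Proof.
  intros Hs.
  apply is_derive_ext_loc with (f := fun x => Wc N R0 phi (rootN N x)).
  - assert (Hd : 0 < R0 ^ N - s) by lra.
    exists (mkposreal _ Hd). intros y Hy. simpl in Hy.
    unfold ball in Hy; simpl in Hy; unfold AbsRing_ball, abs, minus, plus, opp in Hy; simpl in Hy.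
    apply Rabs_lt_between in Hy. rewrite wf_eq; auto; lra.
  - assert (H := is_derive_comp (Wc N R0 phi) (rootN N) s _ _ (Wc_derive (rootN N s)) (rootN_derive N s HN (proj1 Hs))).
    replace (phi (rootN N s) / INR N) with
      (scal (/ INR N * Rpower s (/ INR N - 1)) (rootN N s ^ (N - 1) * phi (clamp R0 (rootN N s)))).
    exact H.
    unfold scal; simpl; unfold mult; simpl.
    assert (Hr := rootN_gt0 N s (proj1 Hs)).
    assert (Hp := rootN_pow N s HN (proj1 Hs)).
    rewrite clamp_id by (apply rootN_in; lra).
    unfold Rminus. rewrite Rpower_plus, Rpower_Ropp, Rpower_1 by lra.
    rewrite <- rootN_pos by lra.
    rewrite pow_N1 in Hp.
    assert (rootN N s ^ (N-1) <> 0) by (apply pow_nonzero; lra).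
    assert (INR N <> 0) by (apply not_0_INR; lia).
    set (r := rootN N s) in *. rewrite <- Hp. field. split; auto; split; auto; lra. auto.
Qed.

Lemma ws_eq s : 0 < s < R0 ^ N ->
  Derive (fun x => RInt (fun r => r ^ (N - 1) * phi r) 0 (rootN N x)) s = phi (rootN N s) / INR N.
Proof. intros; apply is_derive_unique, wf_derive; auto. Qed.

Lemma ws_loc s : 0 < s < R0 ^ N ->
  locally s (fun x => phi (clamp R0 (rootN N x)) / INR N =
     Derive (fun x => RInt (fun r => r ^ (N - 1) * phi r) 0 (rootN N x)) x).
Proof.
  intros Hs. assert (Hd : 0 < Rmin s (R0 ^ N - s)) by (apply Rmin_glb_lt; lra).
  exists (mkposreal _ Hd). intros y Hy. simpl in Hy.
  unfold ball in Hy; simpl in Hy; unfold AbsRing_ball, abs, minus, plus, opp in Hy; simpl in Hy.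
  apply Rabs_lt_between in Hy.
  assert (Hm1 := Rmin_l s (R0 ^ N - s)). assert (Hm2 := Rmin_r s (R0 ^ N - s)).
  rewrite ws_eq by lra. rewrite clamp_id; auto. apply rootN_in; lra.
Qed.

Lemma wf_loc s : s < R0 ^ N ->
  locally s (fun x => Wc N R0 phi (rootN N x) =
     RInt (fun r => r ^ (N - 1) * phi r) 0 (rootN N x)).
Proof.
  intros Hs. assert (Hd : 0 < R0 ^ N - s) by lra.
  exists (mkposreal _ Hd). intros y Hy. simpl in Hy.
  unfold ball in Hy; simpl in Hy; unfold AbsRing_ball, abs, minus, plus, opp in Hy; simpl in Hy.
  apply Rabs_lt_between in Hy. rewrite wf_eq; auto; lra.
Qed.

Lemma wf_bound M s : (forall r, 0 <= r <= R0 -> Rabs (phi r) <= M) -> 0 < s < R0 ^ N ->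
  Rabs (RInt (fun r => r ^ (N - 1) * phi r) 0 (rootN N s)) <= M * s.
Proof.
  intros HM Hs. rewrite wf_eq by lra.
  assert (Hr := rootN_gt0 N s (proj1 Hs)).
  assert (Hri := rootN_in s (proj2 Hs)).
  unfold Wc. eapply Rle_trans.
  apply abs_RInt_le_const with (M := rootN N s ^ (N - 1) * M). lra. apply integ_ex.
  - intros r Hr'. rewrite Rabs_mult. apply Rmult_le_compat; try apply Rabs_pos.
    rewrite Rabs_pos_eq by (apply pow_le; lra). apply pow_incr; lra.
    apply HM, clamp_in; lra.
  - assert (Hp := rootN_pow N s HN (proj1 Hs)).
    rewrite pow_N1 in Hp by auto. replace (M * s) with (M * (rootN N s * rootN N s ^ (N - 1))) by (rewrite Hp; auto). right; ring.
Qed.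

Lemma wf_nonneg s : (forall r, 0 <= r <= R0 -> 0 <= phi r) -> s < R0 ^ N ->
  0 <= RInt (fun r => r ^ (N - 1) * phi r) 0 (rootN N s).
Proof.
  intros Hp Hs. rewrite wf_eq by lra. unfold Wc.
  assert (Hri := rootN_in s Hs).
  apply RInt_ge_0. lra. apply integ_ex. intros x Hx.
  apply Rmult_le_pos. apply pow_le; lra. apply Hp, clamp_in; lra.
Qed.

Lemma wf_zero s : s <= 0 -> RInt (fun r => r ^ (N - 1) * phi r) 0 (rootN N s) = 0.
Proof. intros; rewrite rootN_nonpos; auto. apply (@RInt_point R_CompleteNormedModule). Qed.

Lemma phi_bound : exists M, 0 <= M /\ forall r, 0 <= r <= R0 -> Rabs (phi r) <= M.
Proof.
  destruct (continuity_ab_maj (fun r => Rabs (phi (clamp R0 r))) 0 R0) as [x [Hx _]].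
  lra. intros c _. apply cont_to_pt.
  apply (continuous_comp (fun r => phi (clamp R0 r)) Rabs). apply clamp_cont; auto; lra.
  apply continuous_Rabs.
  exists (Rabs (phi (clamp R0 x))). split. apply Rabs_pos.
  intros r Hr. specialize (Hx r Hr). simpl in Hx. rewrite clamp_id in Hx; auto.
Qed.
End Gen.

Lemma cont_eps_inv (f : R -> R) x : continuous f x ->
  forall eps, 0 < eps -> exists d, 0 < d /\ forall y, Rabs (y - x) < d -> Rabs (f y - f x) < eps.
Proof.
  intros H eps He. apply cont_to_pt in H.
  destruct (H eps He) as [d [Hd Hy]]. exists d; split; auto.
  intros y Hyx. destruct (Req_dec y x) as [->|Hne].
  - unfold Rminus; rewrite Rplus_opp_r, Rabs_R0; auto.
  - apply (Hy y). split. split. exact I. auto. exact Hyx.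
Qed.

Lemma relc_comp (phi g : R -> R) R0 : relc phi R0 ->
  (forall r, 0 <= r <= R0 -> continuous g (phi r)) -> relc (fun r => g (phi r)) R0.
Proof.
  intros Hc Hg r Hr eps He.
  destruct (cont_eps_inv g (phi r) (Hg r Hr) eps He) as [d1 [Hd1 H1]].
  destruct (Hc r Hr d1 Hd1) as [d2 [Hd2 H2]].
  exists d2; split; auto.
Qed.

Lemma cont0 (F : R -> R) e K d : 0 < e -> 0 <= K -> 0 < d ->
  (forall s, s <= 0 -> F s = 0) ->
  (forall s, 0 < s < d -> Rabs (F s) <= K * Rpower s e) -> continuous F 0.
Proof.
  intros He HK Hd H0 Hb. apply cont_eps. intros eps Heps.
  set (c := eps / (K + 1)).
  assert (Hc : 0 < c) by (unfold c; apply Rdiv_lt_0_compat; lra).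
  assert (Hp : 0 < Rpower c (/ e)) by (unfold Rpower; apply exp_pos).
  exists (Rmin d (Rpower c (/ e))). split. apply Rmin_glb_lt; auto.
  intros y Hy. rewrite (H0 0) by lra. unfold Rminus in *. rewrite Ropp_0, Rplus_0_r in *.
  destruct (Rle_or_lt y 0) as [Hy0|Hy0].
  - rewrite H0; auto. rewrite Rabs_R0; auto.
  - rewrite Rabs_pos_eq in Hy by lra.
    assert (Hm1 := Rmin_l d (Rpower c (/ e))). assert (Hm2 := Rmin_r d (Rpower c (/ e))).
    assert (Hlt : Rpower y e < c).
    { replace c with (Rpower (Rpower c (/ e)) e).
      apply Rlt_Rpower_l; auto; lra.
      rewrite Rpower_mult, Rinv_l, Rpower_1; auto; lra. }
    assert (Hpy : 0 < Rpower y e) by (unfold Rpower; apply exp_pos).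
    eapply Rle_lt_trans. apply Hb; lra.
    apply Rle_lt_trans with ((K + 1) * Rpower y e). nra.
    replace eps with ((K + 1) * c) by (unfold c; field; lra). nra.
Qed.

Lemma cmul (f g : R -> R) x : continuous f x -> continuous g x -> continuous (fun y => f y * g y) x.
Proof. apply (continuous_mult f g x). Qed.

Lemma abs_le5 a1 a2 a3 a4 a5 b1 b2 b3 b4 b5 :
  Rabs a1 <= b1 -> Rabs a2 <= b2 -> Rabs a3 <= b3 -> Rabs a4 <= b4 -> Rabs a5 <= b5 ->
  Rabs (a1 * a2 * a3 * a4 * a5) <= b1 * b2 * b3 * b4 * b5.
Proof.
  intros. rewrite !Rabs_mult.
  repeat apply Rmult_le_compat; auto; try apply Rabs_pos; repeat apply Rmult_le_pos; try apply Rabs_pos.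
Qed.

Lemma abs_le4 a1 a2 a3 a4 b1 b2 b3 b4 :
  Rabs a1 <= b1 -> Rabs a2 <= b2 -> Rabs a3 <= b3 -> Rabs a4 <= b4 ->
  Rabs (a1 * a2 * a3 * a4) <= b1 * b2 * b3 * b4.
Proof.
  intros. rewrite !Rabs_mult.
  repeat apply Rmult_le_compat; auto; try apply Rabs_pos; repeat apply Rmult_le_pos; try apply Rabs_pos.
Qed.

Lemma Rpower_cont x e : 0 < x -> continuous (fun y => Rpower y e) x.
Proof.
  intros Hx. apply (@ex_derive_continuous R_AbsRing R_NormedModule).
  eexists. apply is_derive_Reals. apply derivable_pt_lim_power; auto.
Qed.

Lemma Rpower_gt0 x e : 0 < Rpower x e.
Proof. unfold Rpower; apply exp_pos. Qed.

Lemma chi_lower N R0 chi0 a k Cv chi rho vv :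
  (3 <= N)%nat -> 0 < R0 -> 0 < chi0 -> 0 <= a -> 0 < k -> 0 < Cv ->
  condC1 chi chi0 a k -> 0 < rho < R0 -> 0 < vv -> vv <= Cv * Rpower rho (2 - INR N) ->
  chi0 * Rpower (a * R0 ^ (N - 2) + Cv) (- k) * Rpower (rho ^ N) ((1 - 2 / INR N) * k) <= chi vv.
Proof.
  intros HN HR0 Hc0 Ha Hk HCv HC1 Hr Hv Hvb.
  assert (H1 := HC1 vv Hv). apply Rge_le in H1. eapply Rle_trans; [|exact H1].
  rewrite Rmult_assoc. apply Rmult_le_compat_l; [lra|].
  set (q := Rpower rho (2 - INR N)).
  assert (Hq : 0 < q) by apply Rpower_gt0.
  set (K0 := a * R0 ^ (N - 2) + Cv).
  assert (HRq : 1 <= R0 ^ (N - 2) * q).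
  { assert (rho ^ (N - 2) <= R0 ^ (N - 2)) by (apply pow_incr; lra).
    assert (rho ^ (N - 2) * q = 1).
    { unfold q. rewrite <- Rpower_pow by lra. rewrite <- Rpower_plus.
      rewrite minus_INR by lia. replace (INR N - INR 2 + (2 - INR N)) with 0 by (simpl; ring).
      apply Rpower_O; lra. }
    nra. }
  assert (HK0 : 0 < K0) by (unfold K0; assert (0 <= a * R0 ^ (N-2)) by (apply Rmult_le_pos; auto; apply pow_le; lra); lra).
  assert (Hle : a + vv <= K0 * q).
  { assert (a * 1 <= a * (R0 ^ (N - 2) * q)) by (apply Rmult_le_compat_l; auto).
    unfold K0. replace ((a * R0 ^ (N - 2) + Cv) * q) with (a * (R0 ^ (N - 2) * q) + Cv * q) by ring.
    fold q in Hvb. lra. }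
  rewrite (Rpower_Ropp (a + vv) k).
  assert (Hpw : Rpower (a + vv) k <= Rpower (K0 * q) k) by (apply Rle_Rpower_l; lra).
  eapply Rle_trans; [| apply Rinv_le_contravar; [apply Rpower_gt0 | exact Hpw]].
  rewrite <- Rpower_mult_distr by auto. rewrite Rinv_mult.
  rewrite <- Rpower_Ropp. apply Rmult_le_compat_l. left; apply Rpower_gt0.
  rewrite <- Rpower_Ropp. unfold q. rewrite Rpower_mult.
  rewrite <- Rpower_pow by lra. rewrite Rpower_mult. right. f_equal.
  assert (INR N <> 0) by (apply not_0_INR; lia). field; auto.
Qed.

Theorem lemma3p3 :
  forall (N : nat) (R0 chi0 a k Cv : R),
    (3 <= N)%nat -> 0 < R0 -> 0 < chi0 -> 0 <= a -> 0 < k -> 0 < Cv ->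
    exists C : R, 0 < C /\
      forall (m gamma : R) (chi : R -> R) (u0 : R -> R) (u v : R -> R -> R)
             (Tmax : Rbar),
        1 <= m -> 0 < gamma < 1 ->
        condC1 chi chi0 a k -> condC2 chi (eta N R0 u0) ->
        admissible_u0 R0 u0 ->
        max_radial_classical_solution N R0 m chi u0 u v Tmax ->
        (forall r t, 0 < r < R0 -> 0 < t -> Rbar_lt t Tmax ->
           v r t <= Cv * Rpower r (2 - INR N)) ->
        forall t s0, 0 < t -> Rbar_lt t Tmax -> 0 < s0 < R0 ^ N ->
          I2 N gamma chi u v s0 t >=
          C * RInt (fun s => Rpower s (- gamma + (1 - 2 / INR N) * k) * (s0 - s)
                             * wfun N u s t * ws N u s t) 0 s0.
Proof.
  intros N R0 chi0 a k Cv HN HR0 Hc0 Ha Hk HCv.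
  set (K0 := a * R0 ^ (N - 2) + Cv).
  exists (INR N * (chi0 * Rpower K0 (- k))). split.
  { apply Rmult_lt_0_compat. apply lt_0_INR; lia. apply Rmult_lt_0_compat; auto; apply Rpower_gt0. }
  intros m gamma chi u0 u v Tmax Hm Hg HC1 HC2 Hu0 Hsol Hvb t s0 Ht HtT Hs0.
  destruct Hsol as [_ [Hcu [Hcv [_ [_ [_ [_ [_ [_ [Hun [Hvp _]]]]]]]]]]].
  assert (HN1 : (1 <= N)%nat) by lia.
  assert (HNpos : 0 < INR N) by (apply lt_0_INR; lia).
  assert (HN1r : 1 <= INR N) by (replace 1 with (INR 1) by (simpl; ring); apply le_INR; lia).
  assert (HRN : 0 < R0 ^ N) by (apply pow_lt; lra).
  assert (Hru : relc (fun r => u r t) R0).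
  { intros r Hr eps He.
    destruct (Hcu r t (conj Hr (conj (Rlt_le _ _ Ht) HtT)) eps He) as [d [Hd H]].
    exists d; split; auto. intros r' Hr' Hrr. apply H; auto.
    split; auto; split; [lra|auto]. unfold Rminus; rewrite Rplus_opp_r, Rabs_R0; auto. }
  assert (Hrv : relc (fun r => v r t) R0).
  { intros r Hr eps He.
    destruct (Hcv r t (conj Hr (conj Ht HtT)) eps He) as [d [Hd H]].
    exists d; split; auto. intros r' Hr' Hrr. apply H; auto.
    unfold Rminus; rewrite Rplus_opp_r, Rabs_R0; auto. }
  assert (Hchic : forall y, 0 < y -> continuous chi y).
  { intros y Hy. destruct HC2 as [Hd _]. destruct (Hd y Hy) as [Hd1 _].
    apply (@ex_derive_continuous R_AbsRing R_NormedModule); auto. }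
  assert (Hrcv : relc (fun r => chi (v r t)) R0).
  { apply (relc_comp (fun r => v r t) chi); auto; intros r Hr; apply Hchic, Hvp; auto. }
  destruct (phi_bound R0 (fun r => u r t) HR0 Hru) as [Mu [HMu0 HMu]].
  destruct (phi_bound R0 (fun r => chi (v r t)) HR0 Hrcv) as [Mc [HMc0 HMc]].
  assert (Ewu : forall s, 0 < s < R0 ^ N -> ws N u s t = u (rootN N s) t / INR N).
  { intros s Hs. exact (ws_eq N R0 (fun r => u r t) HN1 HR0 Hru s Hs). }
  assert (Ewv : forall s, 0 < s < R0 ^ N -> INR N * ws N v s t = v (rootN N s) t).
  { intros s Hs. unfold ws, wfun. rewrite (ws_eq N R0 (fun r => v r t) HN1 HR0 Hrv s Hs).
    field. lra. }
  assert (Wz : forall s, s <= 0 -> wfun N u s t = 0).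
  { intros s Hs. exact (wf_zero N (fun r => u r t) s Hs). }
  assert (Wb : forall s, 0 < s < R0 ^ N -> Rabs (wfun N u s t) <= Mu * s).
  { intros s Hs. exact (wf_bound N R0 (fun r => u r t) HN1 HR0 Hru Mu s HMu Hs). }
  assert (Wn : forall s, s < R0 ^ N -> 0 <= wfun N u s t).
  { intros s Hs. apply (wf_nonneg N R0 (fun r => u r t) HN1 HR0 Hru s); auto.
    intros r Hr. apply Hun; auto; lra. }
  assert (Weq : forall s, s < R0 ^ N -> wfun N u s t = Wc N R0 (fun r => u r t) (rootN N s)).
  { intros s Hs. exact (wf_eq N R0 (fun r => u r t) HN1 HR0 s Hs). }
  assert (Hbeta : 0 <= (1 - 2 / INR N) * k).
  { apply Rmult_le_pos; [|lra]. assert (3 <= INR N) by (replace 3 with (INR 3) by (simpl; ring); apply le_INR; lia).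
    assert (2 / INR N <= 1). { apply (Rmult_le_reg_r (INR N)); auto. field_simplify; lra. }
    lra. }
  set (beta := (1 - 2 / INR N) * k) in *.
  unfold I2.
  set (f := fun s => Rpower s (- gamma) * (s0 - s) * chi (INR N * ws N v s t) * wfun N u s t * ws N u s t).
  set (g := fun s => Rpower s (- gamma + beta) * (s0 - s) * wfun N u s t * ws N u s t).
  assert (Hloc : forall z, 0 < z < R0 ^ N -> locally z (fun x => 0 < x < R0 ^ N)).
  { intros z Hz. assert (Hd : 0 < Rmin z (R0 ^ N - z)) by (apply Rmin_glb_lt; lra).
    exists (mkposreal _ Hd). intros y Hy. simpl in Hy.
    unfold ball in Hy; simpl in Hy; unfold AbsRing_ball, abs, minus, plus, opp in Hy; simpl in Hy.
    apply Rabs_lt_between in Hy.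
    assert (Hm1 := Rmin_l z (R0 ^ N - z)). assert (Hm2 := Rmin_r z (R0 ^ N - z)). lra. }
  set (rc := fun x => clamp R0 (rootN N x)).
  assert (Hrc : forall x, 0 < x < R0 ^ N -> rc x = rootN N x).
  { intros x Hx. unfold rc. apply clamp_id. apply rootN_in; auto; lra. }
  assert (HU : forall z, 0 < z -> continuous (fun x => u (rc x) t * / INR N) z).
  { intros z Hz. apply cmul; [|apply continuous_const].
    apply (continuous_comp (rootN N) (fun y => u (clamp R0 y) t)). apply rootN_cont; auto.
    apply (clamp_cont (fun r => u r t)); auto; lra. }
  assert (HV : forall z, 0 < z -> continuous (fun x => chi (v (rc x) t)) z).
  { intros z Hz.
    apply (continuous_comp (rootN N) (fun y => chi (v (clamp R0 y) t))). apply rootN_cont; auto.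
    apply (continuous_comp (fun y => v (clamp R0 y) t) chi). apply (clamp_cont (fun r => v r t)); auto; lra.
    apply Hchic, Hvp; auto. apply clamp_in; lra. }
  assert (HW : forall z, 0 < z -> continuous (fun x => Wc N R0 (fun r => u r t) (rootN N x)) z).
  { intros z Hz. apply (continuous_comp (rootN N) (Wc N R0 (fun r => u r t))). apply rootN_cont; auto.
    apply Wc_cont; auto. }
  assert (HP : forall z e, 0 < z -> continuous (fun x => Rpower x e) z).
  { intros; apply Rpower_cont; auto. }
  assert (HL : forall z, continuous (fun x => s0 - x) z).
  { intros z. apply (@ex_derive_continuous R_AbsRing R_NormedModule). auto_derive; auto. }
  assert (Cf : forall z, 0 < z < R0 ^ N -> continuous f z).
  { intros z Hz.
    apply continuous_ext_loc with (g := fun x => Rpower x (- gamma) * (s0 - x) * chi (v (rc x) t)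
       * Wc N R0 (fun r => u r t) (rootN N x) * (u (rc x) t * / INR N)).
    - apply (filter_imp (fun x => 0 < x < R0 ^ N)); [|apply Hloc; auto].
      intros x Hx. unfold f. rewrite Ewv, Ewu, Weq, Hrc; auto; try lra.
    - apply cmul; [apply cmul; [apply cmul; [apply cmul; [apply HP; lra | apply HL] | apply HV; lra] | apply HW; lra] | apply HU; lra]. }
  assert (Cg : forall z, 0 < z < R0 ^ N -> continuous g z).
  { intros z Hz.
    apply continuous_ext_loc with (g := fun x => Rpower x (- gamma + beta) * (s0 - x)
       * Wc N R0 (fun r => u r t) (rootN N x) * (u (rc x) t * / INR N)).
    - apply (filter_imp (fun x => 0 < x < R0 ^ N)); [|apply Hloc; auto].
      intros x Hx. unfold g. rewrite Ewu, Weq, Hrc; auto; try lra.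
    - apply cmul; [apply cmul; [apply cmul; [apply HP; lra | apply HL] | apply HW; lra] | apply HU; lra]. }
  assert (Hrin : forall s, 0 < s < R0 ^ N -> 0 <= rootN N s <= R0).
  { intros s Hs. apply rootN_in; auto; lra. }
  assert (HUb : forall s, 0 < s < R0 ^ N -> Rabs (ws N u s t) <= Mu).
  { intros s Hs. rewrite Ewu by auto. unfold Rdiv. rewrite Rabs_mult.
    rewrite (Rabs_pos_eq (/ INR N)) by (left; apply Rinv_0_lt_compat; lra).
    assert (H1 := HMu _ (Hrin s Hs)). assert (/ INR N <= 1).
    { rewrite <- Rinv_1. apply Rinv_le_contravar; lra. }
    assert (0 <= Rabs (u (rootN N s) t)) by apply Rabs_pos. nra. }
  assert (HL0 : forall s, 0 < s < R0 ^ N -> Rabs (s0 - s) <= s0 + R0 ^ N).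
  { intros s Hs. unfold Rabs; destruct Rcase_abs; lra. }
  assert (HPs : forall s e, 0 < s -> Rpower s e * s = Rpower s (e + 1)).
  { intros s e Hs. rewrite Rpower_plus, Rpower_1; auto. }
  assert (C0f : continuous f 0).
  { apply (cont0 f (1 - gamma) ((s0 + R0 ^ N) * Mc * Mu * Mu) (R0 ^ N)); try lra.
    - repeat apply Rmult_le_pos; lra.
    - intros s Hs. unfold f. rewrite Wz; auto; ring.
    - intros s Hs. unfold f.
      eapply Rle_trans. apply abs_le5 with (b1 := Rpower s (- gamma)) (b2 := s0 + R0 ^ N)
        (b3 := Mc) (b4 := Mu * s) (b5 := Mu); auto.
      + rewrite Rabs_pos_eq; [lra | left; apply Rpower_gt0].
      + rewrite Ewv by auto. apply (HMc (rootN N s)). auto.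
      + replace (1 - gamma) with (- gamma + 1) by ring. rewrite <- HPs by lra.
        right; ring. }
  assert (C0g : continuous g 0).
  { apply (cont0 g (1 - gamma + beta) ((s0 + R0 ^ N) * Mu * Mu) (R0 ^ N)); try lra.
    - repeat apply Rmult_le_pos; lra.
    - intros s Hs. unfold g. rewrite Wz; auto; ring.
    - intros s Hs. unfold g.
      eapply Rle_trans. apply abs_le4 with (b1 := Rpower s (- gamma + beta)) (b2 := s0 + R0 ^ N)
        (b3 := Mu * s) (b4 := Mu); auto.
      + rewrite Rabs_pos_eq; [lra | left; apply Rpower_gt0].
      + replace (1 - gamma + beta) with (- gamma + beta + 1) by ring. rewrite <- HPs by lra.
        right; ring. }
  assert (Ef : ex_RInt f 0 s0).
  { apply (@ex_RInt_continuous R_CompleteNormedModule). intros z Hz.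
    rewrite Rmin_left in Hz by lra. rewrite Rmax_right in Hz by lra.
    destruct (Req_dec z 0) as [->|Hz0]; auto. apply Cf; lra. }
  assert (Eg : ex_RInt g 0 s0).
  { apply (@ex_RInt_continuous R_CompleteNormedModule). intros z Hz.
    rewrite Rmin_left in Hz by lra. rewrite Rmax_right in Hz by lra.
    destruct (Req_dec z 0) as [->|Hz0]; auto. apply Cg; lra. }
  set (c := chi0 * Rpower K0 (- k)).
  assert (Ecg : ex_RInt (fun s => c * g s) 0 s0).
  { exact (@ex_RInt_scal R_CompleteNormedModule g 0 s0 c Eg). }
  assert (Hcg : RInt (fun s => c * g s) 0 s0 = c * RInt g 0 s0).
  { exact (@RInt_scal R_CompleteNormedModule g 0 s0 c Eg). }
  assert (Hpt : forall x, 0 < x < s0 -> c * g x <= f x).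
  { intros x Hx. assert (Hx' : 0 < x < R0 ^ N) by lra.
    assert (Hr := rootN_gt0 N x (proj1 Hx)).
    assert (Hrl := rootN_lt N x R0 HN1 HR0 Hx').
    assert (Hch := chi_lower N R0 chi0 a k Cv chi (rootN N x) (v (rootN N x) t) HN HR0 Hc0 Ha Hk HCv HC1
      (conj Hr Hrl) (Hvp _ _ (Hrin x Hx') Ht HtT) (Hvb _ _ (conj Hr Hrl) Ht HtT)).
    rewrite rootN_pow in Hch by (auto; lra). fold K0 beta c in Hch.
    unfold f, g. rewrite Ewv by auto. rewrite Rpower_plus.
    assert (HW0 := Wn x (proj2 Hx')).
    assert (HU0 : 0 <= ws N u x t).
    { rewrite Ewu by auto. unfold Rdiv. apply Rmult_le_pos; [apply Hun; [apply Hrin; auto | lra | auto] |].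
      left; apply Rinv_0_lt_compat; lra. }
    assert (HQ : 0 <= Rpower x (- gamma) * (s0 - x) * wfun N u x t * ws N u x t).
    { repeat apply Rmult_le_pos; try lra; auto. left; apply Rpower_gt0. }
    replace (c * (Rpower x (- gamma) * Rpower x beta * (s0 - x) * wfun N u x t * ws N u x t))
      with ((Rpower x (- gamma) * (s0 - x) * wfun N u x t * ws N u x t) * (c * Rpower x beta)) by ring.
    replace (Rpower x (- gamma) * (s0 - x) * chi (v (rootN N x) t) * wfun N u x t * ws N u x t)
      with ((Rpower x (- gamma) * (s0 - x) * wfun N u x t * ws N u x t) * chi (v (rootN N x) t)) by ring.
    apply Rmult_le_compat_l; auto. }
  assert (Hle : RInt (fun s => c * g s) 0 s0 <= RInt f 0 s0).
  { apply RInt_le; auto. lra. }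
  rewrite Hcg in Hle. apply Rle_ge. rewrite Rmult_assoc.
  apply Rmult_le_compat_l; lra.
Qed.
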